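(* Let $1\le k<r$ and let $T_k$ be a single-vertex-bag weighted threshold matrix on $v_k,\dots,v_r$ with vertex weights $p^{(k)}_i$ ($k\le i\le r$) and edge weights $\epsilon^{(k)}_{i,j}$ ($k\le i<j\le r$, $j$ even). Set $\epsilon^{(k)}_{k,k+1}=0$ if $k+1$ is odd. Suppose that $p^{(k)}_k=p^{(k)}_{k+1}$ and $\epsilon^{(k)}_{k,j}=\epsilon^{(k)}_{k+1,j}$ for every even $j$ with $k+1<j\le r$. Let $T_{k+1}$ be the single-vertex-bag weighted threshold matrix on $v_{k+1},\dots,v_r$ with (a) $p^{(k+1)}_i=p^{(k)}_i$ for $k+2\le i\le r$; (b) $p^{(k+1)}_{k+1}=p^{(k)}_k+\epsilon^{(k)}_{k,k+1}$; (c) $\epsilon^{(k+1)}_{i,j}=\epsilon^{(k)}_{i,j}$ for $k+1<i<j\le r$, $j$ even; (d) $\epsilon^{(k+1)}_{k+1,j}=\sqrt2\,\epsilon^{(k)}_{k+1,j}$ for $k+1<j\le r$, $j$ even. Then, as multisets, $\mathrm{Spec}(T_k)=\mathrm{Spec}(T_{k+1})\cup\{p^{(k)}_k-\epsilon^{(k)}_{k,k+1}\}$.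
   Context: A single-vertex-bag weighted threshold matrix on $v_k,\dots,v_r$ is the real symmetric matrix indexed by $v_k,\dots,v_r$ with diagonal entries $p_i$ (the vertex weights) and, for $i<j$, entry $\epsilon_{i,j}\ne 0$ at positions $(v_i,v_j),(v_j,v_i)$ if $j$ is even and entry $0$ if $j$ is odd (so $v_i$ and $v_j$, $i<j$, are adjacent iff $j$ is even; this is a threshold graph whose bags are singletons, the bag of index $i$ being a union-bag for $i$ odd and a join-bag for $i$ even). $\mathrm{Spec}$ denotes the multiset of eigenvalues, and $\cup$ of multisets adds multiplicities. *)

(* Defs.v *)
From mathcomp Require Import all_boot all_order all_algebra.
Set Implicit Arguments. Unset Strict Implicit. Unset Printing Implicit Defensive.
Import Order.TTheory GRing.Theory Num.Theory.
Local Open Scope ring_scope.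

(* Row/column index a : 'I_(r - k + 1) stands for vertex v_(k + a). *)
Definition swtm (R : ringType) (k r : nat) (p : nat -> R) (eps : nat -> nat -> R)
  : 'M[R]_(r - k + 1) :=
  \matrix_(a, b)
    let i := (k + a)%N in let j := (k + b)%N in
    if i == j then p i
    else if (i < j)%N then (if odd j then 0 else eps i j)
    else (if odd i then 0 else eps j i).

Definition swtm_weights (R : ringType) (k r : nat) (eps : nat -> nat -> R) : Prop :=
  forall i j, (k <= i)%N -> (i < j)%N -> (j <= r)%N -> ~~ odd j -> eps i j != 0.

(* Multiplicity of x in the spectrum (multiset of eigenvalues) of A:
   its multiplicity as a root of the characteristic polynomial. *)
Definition spec_mult (R : fieldType) (n : nat) (A : 'M[R]_n) (x : R) : nat :=
  mup x (char_poly A).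

(* Main.v *)
Require Import Defs.
From mathcomp Require Import all_boot all_order all_algebra.
From mathcomp Require Import ring lra zify.
Import Order.TTheory GRing.Theory Num.Theory.
Set Implicit Arguments. Unset Strict Implicit. Unset Printing Implicit Defensive.
Local Open Scope ring_scope.

Lemma char_poly_cast (F : nzRingType) m m' (e : m = m') (A : 'M[F]_m) :
  char_poly (castmx (e, e) A) = char_poly A.
Proof. by case: m' / e; rewrite castmx_id. Qed.

Lemma char_poly_sim (F : fieldType) m (A D P : 'M[F]_m) :
  P \in unitmx -> A *m P = P *m D -> char_poly A = char_poly D.
Proof.
move=> Pu eq.
have H : char_poly_mx A *m map_mx polyC P = map_mx polyC P *m char_poly_mx D.
  rewrite /char_poly_mx mulmxBl mulmxBr -!map_mxM eq mul_scalar_mx mul_mx_scalar.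
  by [].
move/(congr1 determinant): H; rewrite !det_mulmx det_map_mx /= [X in _ = X]mulrC.
move=> H; rewrite /char_poly; apply: (mulIf _ H).
by rewrite polyC_eq0 -unitfE -unitmxE.
Qed.

Lemma sum_delta (F : nzRingType) n i (Hi : (i < n)%N) (X : nat -> F) :
  \sum_(l < n) ((i == val l)%:R * X (val l)) = X i.
Proof.
rewrite (bigD1 (Ordinal Hi)) //= eqxx mul1r big1 ?addr0 // => l /negbTE H.
suff -> : (i == val l) = false by rewrite mul0r.
by apply/negbTE; apply: contraFN H => /eqP E; apply/eqP/val_inj.
Qed.
Definition dfun (R : nzRingType) (c : R) (g : nat -> nat -> R) (i j : nat) : R :=
  match i, j with
  | 0, 0 => c
  | 0, _ => 0
  | _, 0 => 0
  | i.+1, j.+1 => g i j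
  end.

Lemma charD (R : fieldType) n (c : R) (g : nat -> nat -> R) :
  char_poly (\matrix_(i, j < n.+2) dfun c g i j) =
  ('X - c%:P) * char_poly (\matrix_(i, j < n.+1) g i j).
Proof.
rewrite /char_poly (expand_det_row _ ord0) big_ord_recl big1; last first.
  by move=> j _; rewrite !mxE lift0 /= mulr0n polyC0 subr0 mul0r.
rewrite addr0 !mxE /= mulr1n /cofactor row'_col'_char_poly_mx /= expr0 mul1r.
congr (_ * \det (char_poly_mx _)); apply/matrixP => i j; rewrite !mxE !lift0 //.
Qed.

Lemma sum_delta' (F : nzRingType) n i (Hi : (i < n)%N) (X : nat -> F) :
  \sum_(l < n) (X (val l) * (val l == i)%:R) = X i.
Proof.
rewrite -(sum_delta Hi); apply: eq_bigr => l _; rewrite eq_sym.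
by case: (i == val l); rewrite ?mulr1 ?mul1r ?mulr0 ?mul0r.
Qed.

Lemma sum_mul0 (F : nzRingType) n (X : 'I_n -> F) : \sum_(l < n) (X l * 0) = 0.
Proof. by rewrite big1 // => l _; rewrite mulr0. Qed.
Lemma sum_0mul (F : nzRingType) n (X : 'I_n -> F) : \sum_(l < n) (0 * X l) = 0.
Proof. by rewrite big1 // => l _; rewrite mul0r. Qed.

Definition pfun (R : nzRingType) (lam : R) (i j : nat) : R :=
  match i, j with
  | 0, 0 => 1 | 0, 1 => lam | 1, 0 => -1 | 1, 1 => lam
  | i'.+2, j'.+2 => (i' == j')%:R
  | _, _ => 0 end.

Definition qfun (R : fieldType) (lam : R) (i j : nat) : R :=
  match i, j with
  | 0, 0 => 2^-1 | 0, 1 => - 2^-1 | 1, 0 => lam | 1, 1 => lam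
  | i'.+2, j'.+2 => (i' == j')%:R
  | _, _ => 0 end.

Lemma key (R : realFieldType) n (f g : nat -> nat -> R) (a e t lam : R) :
  lam * t = 1 -> lam *+ 2 = t ->
  f 0 0 = a -> f 1 1 = a -> f 0 1 = e -> f 1 0 = e ->
  (forall j, (j < n)%N -> f 0 j.+2 = f 1 j.+2) ->
  (forall j, (j < n)%N -> f j.+2 0 = f j.+2 1) ->
  g 0 0 = a + e ->
  (forall j, (j < n)%N -> g 0 j.+1 = t * f 1 j.+2) ->
  (forall j, (j < n)%N -> g j.+1 0 = t * f j.+2 1) ->
  (forall i j, (i < n)%N -> (j < n)%N -> g i.+1 j.+1 = f i.+2 j.+2) ->
  char_poly (\matrix_(i, j < n.+2) f i j) =
  ('X - (a - e)%:P) * char_poly (\matrix_(i, j < n.+1) g i j).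
Proof.
move=> hlt hl2 h00 h11 h01 h10 h0j hj0 g00 g0j gj0 gij.
rewrite -charD.
have l2 : lam * lam = 2^-1.
  have h : (lam * lam) *+ 2 = 1 by rewrite -mulrnAr hl2.
  lra.
apply: (@char_poly_sim _ _ _ _ (\matrix_(i, j < n.+2) pfun lam i j)).
  { suff H : (\matrix_(i, j < n.+2) pfun lam i j) *m (\matrix_(i, j < n.+2) qfun lam i j) = 1%:M.
    by case: (mulmx1_unit H).
  apply/matrixP => i j; rewrite !mxE !big_ord_recl; under eq_bigr => l _ do rewrite !mxE !lift0; rewrite !mxE /=.
  case: i => [[|[|i]] Hi]; case: j => [[|[|j]] Hj] /=; rewrite ?sum_mul0 ?sum_0mul ?l2.
  all: try lra.
  have Hi' : (i < n)%N by [].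
  by rewrite (@sum_delta _ n i Hi' (fun l => (l == j)%:R)) /= !mul0r !add0r. }
apply/matrixP => i j; rewrite !mxE !big_ord_recl; under eq_bigr => l _ do rewrite !mxE !lift0.
under [in RHS]eq_bigr => l _ do rewrite !mxE !lift0.
rewrite !mxE /= ?add0n (_ : bump 0 0 = 1%N) //.
case: i => [[|[|i]] Hi]; case: j => [[|[|j]] Hj] /=; rewrite ?sum_mul0 ?sum_0mul.
- by rewrite h00 h01; ring.
- by rewrite h00 h01 g00; ring.
- have Hj' : (j < n)%N by [].
  rewrite (@sum_delta' _ n j Hj' (fun l => f 0%N l.+2)) h0j // g0j // mulrA hlt; ring.
- by rewrite h10 h11; ring.
- by rewrite h10 h11 g00; ring.
- have Hj' : (j < n)%N by [].
  rewrite (@sum_delta' _ n j Hj' (fun l => f 1%N l.+2)) g0j // mulrA hlt; ring.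
- have Hi' : (i < n)%N by [].
  rewrite hj0 //; ring.
- have Hi' : (i < n)%N by [].
  rewrite (@sum_delta _ n i Hi' (fun l => g l.+1 0%N)) gj0 // hj0 // -hl2; ring.
- have Hi' : (i < n)%N by [].
  have Hj' : (j < n)%N by [].
  rewrite (@sum_delta' _ n j Hj' (fun l => f i.+2 l.+2)).
  rewrite (@sum_delta _ n i Hi' (fun l => g l.+1 j.+1)) gij //; ring.
Qed.

Definition body (R : nzRingType) (k : nat) (p : nat -> R) (eps : nat -> nat -> R)
  (a b : nat) : R :=
  let i := (k + a)%N in let j := (k + b)%N in
  if i == j then p i
  else if (i < j)%N then (if odd j then 0 else eps i j)
  else (if odd i then 0 else eps j i).

Lemma swtm_cast (R : nzRingType) k r p eps m (E : (r - k + 1 = m)%N) :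
  castmx (E, E) (@swtm R k r p eps) = \matrix_(a, b < m) body k p eps a b.
Proof. by apply/matrixP => i j; rewrite castmxE !mxE. Qed.

Lemma body_diag (R : nzRingType) k p eps a : @body R k p eps a a = p (k + a)%N.
Proof. by rewrite /body eqxx. Qed.

Lemma body_lt (R : nzRingType) k p eps a b : (a < b)%N ->
  @body R k p eps a b = if odd (k + b) then 0 else eps (k + a)%N (k + b)%N.
Proof.
move=> H; have H' : (k + a < k + b)%N by rewrite ltn_add2l.
by rewrite /body ltn_eqF // H'.
Qed.

Lemma body_gt (R : nzRingType) k p eps a b : (b < a)%N ->
  @body R k p eps a b = if odd (k + a) then 0 else eps (k + b)%N (k + a)%N.
Proof.
move=> H; have H' : (k + b < k + a)%N by rewrite ltn_add2l.
by rewrite /body gtn_eqF // ltnNge ltnW.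
Qed.

Lemma mup_XsubC (F : fieldType) (x c : F) : mup x ('X - c%:P) = (x == c).
Proof. by rewrite -(expr1 ('X - c%:P)) mup_XsubCX eq_sym; case: eqP. Qed.

Theorem mainTheorem4 (R : rcfType) (k r : nat)
  (p : nat -> R) (eps : nat -> nat -> R)
  (p1 : nat -> R) (eps1 : nat -> nat -> R) :
  (1 <= k)%N -> (k < r)%N ->
  swtm_weights k r eps ->
  (* convention: eps_{k,k+1} = 0 if k+1 is odd *)
  (odd k.+1 -> eps k k.+1 = 0) ->
  p k = p k.+1 ->
  (forall j, (k.+1 < j)%N -> (j <= r)%N -> ~~ odd j -> eps k j = eps k.+1 j) ->
  (* (a) *) (forall i, (k.+2 <= i)%N -> (i <= r)%N -> p1 i = p i) ->
  (* (b) *) p1 k.+1 = p k + eps k k.+1 ->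
  (* (c) *) (forall i j, (k.+1 < i)%N -> (i < j)%N -> (j <= r)%N -> ~~ odd j ->
               eps1 i j = eps i j) ->
  (* (d) *) (forall j, (k.+1 < j)%N -> (j <= r)%N -> ~~ odd j ->
               eps1 k.+1 j = Num.sqrt 2 * eps k.+1 j) ->
  forall x : R,
    spec_mult (swtm k r p eps) x =
    addn (spec_mult (swtm k.+1 r p1 eps1) x) (x == p k - eps k k.+1).
Proof.
move=> hk hkr _ hodd hpk heps ha hb hc hd x.
pose n := (r - k.+1)%N.
have E1 : (r - k + 1 = n.+2)%N by rewrite /n; lia.
have E2 : (r - k.+1 + 1 = n.+1)%N by rewrite addn1.
rewrite /spec_mult -(char_poly_cast E1) -(char_poly_cast E2) !swtm_cast.
have s2 : Num.sqrt (2 : R) * Num.sqrt 2 = 2 by rewrite -expr2 sqr_sqrtr ?ler0n.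
rewrite (@key R n (body k p eps) (body k.+1 p1 eps1) (p k) (eps k k.+1)
   (Num.sqrt 2) (Num.sqrt 2 / 2)).
- rewrite mupM ?monic_neq0 ?char_poly_monic ?monicXsubC //. rewrite addnC; congr (_ + _)%N; exact: mup_XsubC.
- by rewrite mulrAC s2 divff ?pnatr_eq0.
- lra.
- by rewrite body_diag addn0.
- by rewrite body_diag addn1 hpk.
- rewrite body_lt // addn0 addn1; case: ifP => // Ho; by rewrite hodd.
- rewrite body_gt // addn0 addn1; case: ifP => // Ho; by rewrite hodd.
- move=> j Hj; rewrite !body_lt // addn0 addn1; case: ifP => // Ho.
  rewrite heps ?Ho //; rewrite /n in Hj; lia.
- move=> j Hj; rewrite !body_gt // addn0 addn1; case: ifP => // Ho.
  rewrite heps ?Ho //; rewrite /n in Hj; lia.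
- by rewrite body_diag addn0 hb.
- move=> j Hj; rewrite !body_lt // !addSn !addnS ?addn0 ?addn1; case: ifP => Ho.
    by rewrite mulr0.
  rewrite hd ?Ho //; rewrite /n in Hj; lia.
- move=> j Hj; rewrite !body_gt // !addSn !addnS ?addn0 ?addn1; case: ifP => Ho.
    by rewrite mulr0.
  rewrite hd ?Ho //; rewrite /n in Hj; lia.
- move=> i j Hi Hj; rewrite /n in Hi Hj; case: (ltngtP i j) => Hij.
  + rewrite !body_lt ?ltnS // !addSn !addnS; case: ifP => // Ho.
    rewrite hc ?Ho //; lia.
  + rewrite !body_gt ?ltnS // !addSn !addnS; case: ifP => // Ho.
    rewrite hc ?Ho //; lia.
  + subst j; rewrite !body_diag !addSn !addnS ha //; lia.
Qed.
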